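(* For every integer $d\ge 1$, every $d$-regular graph $G$ has a canonical path partition.
   Context: All graphs are finite, simple and undirected. A path partition of a graph $G=(V,E)$ is a set of vertex-disjoint paths of $G$ (a single vertex is allowed as a path) whose vertex sets together cover $V$; its members are called components. A component with $t\ge 3$ vertices is a cycle component if the subgraph of $G$ induced on its vertex set has a spanning cycle; a component consisting of one vertex is an isolated vertex; every other component is a path component. A path partition of $G$ is canonical if (1) it has the minimum number of components among all path partitions of $G$; (2) among path partitions satisfying (1), it has the maximum number of cycle components; and (3) it has no isolated vertices. *)

(* Defs.v *)
(* A simple graph on a finite vertex type T is a symmetric,
   irreflexive boolean relation e : rel T. *)
From mathcomp Require Import all_boot.
Set Implicit Arguments. Unset Strict Implicit. Unset Printing Implicit Defensive.

Section PathPartitions.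
Variables (T : finType) (e : rel T).

Definition is_gpath (p : seq T) : bool :=
  if p is x :: q then path e x q && uniq p else false.

(* A path partition: vertex-disjoint paths whose vertex sets cover V
   (the concatenation of the paths is a permutation of all vertices). *)
Definition path_partition (P : seq (seq T)) : bool :=
  all is_gpath P && perm_eq (flatten P) (enum T).

(* Cycle component: at least 3 vertices and the induced subgraph on its
   vertex set has a spanning cycle, i.e. some ordering of its vertices is an
   e-cycle. *)
Definition cycle_component (p : seq T) : bool :=
  (2 < size p) && has (cycle e) (permutations p).

Definition isolated_vertex (p : seq T) : bool := size p == 1.

Definition canonical_path_partition (P : seq (seq T)) : Prop :=
  [/\ path_partition P,
      (forall Q, path_partition Q -> size P <= size Q),
      (forall Q, path_partition Q -> size Q = size P ->
                 count cycle_component Q <= count cycle_component P)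
    & ~~ has isolated_vertex P].

End PathPartitions.

Definition regular (T : finType) (e : rel T) (d : nat) : Prop :=
  forall x : T, #|[set y | e x y]| = d.

(* Main.v *)
From Stdlib Require Import ClassicalEpsilon.
Require Import Defs.
From mathcomp Require Import all_boot zify.
Set Implicit Arguments. Unset Strict Implicit. Unset Printing Implicit Defensive.

Section Gen.
Variables (T : finType) (e : rel T) (esym : symmetric e) (eirr : irreflexive e).

Notation gp := (is_gpath e).
Notation pp := (path_partition e).
Notation cc := (cycle_component e).
Notation iso := (@isolated_vertex T).

Lemma gpath_rev p : gp p -> gp (rev p).
Proof.
case: p => [|y q] // /andP[hp hu].
have hu' : uniq (rev (y :: q)) by rewrite rev_uniq.
move: hu'; rewrite [y :: q]lastI rev_rcons /= => ->; rewrite andbT.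
rewrite rev_path; apply: etrans hp; apply: eq_path => a b; exact: esym.
Qed.

Lemma gpath_catr s t : gp (s ++ t) -> t != [::] -> gp t.
Proof.
case: t => [|z t] // h _; case: s h => [|y s] // /andP[hp hu].
rewrite cat_path /= in hp; case/and3P: hp => _ _ hp.
by rewrite cat_uniq in hu; case/and3P: hu => _ _ hu; apply/andP.
Qed.

Lemma gpath_catl s t : gp (s ++ t) -> s != [::] -> gp s.
Proof.
case: s => [|y s] // /andP[hp hu] _.
rewrite cat_path in hp; case/andP: hp => hp _.
by rewrite cat_uniq in hu; case/and3P: hu => hu _ _; apply/andP.
Qed.

Lemma pp_uniq Q : pp Q -> uniq (flatten Q).
Proof. by case/andP=> _ /perm_uniq ->; rewrite enum_uniq. Qed.

Lemma comp_eq Q p1 p2 x : pp Q -> p1 \in Q -> p2 \in Q -> x \in p1 -> x \in p2 -> p1 = p2.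
Proof.
move/pp_uniq; elim: Q => [|q Q IH] //= hu.
rewrite cat_uniq in hu; case/and3P: hu => _ hdis hu.
rewrite !in_cons => /orP[/eqP->|h1] /orP[/eqP->|h2] hx1 hx2 //.
- case/negP: hdis; apply/hasP; exists x => //; apply/flattenP; by exists p2.
- case/negP: hdis; apply/hasP; exists x => //; apply/flattenP; by exists p1.
- exact: IH.
Qed.

Lemma comp_exists Q u : pp Q -> exists2 C, C \in Q & u \in C.
Proof.
case/andP=> _ hp; have : u \in flatten Q by rewrite (perm_mem hp) mem_enum.
by case/flattenP=> C hC hu; exists C.
Qed.

Lemma replace Q A Rest B : pp Q -> perm_eq Q (A ++ Rest) -> all gp B ->
  perm_eq (flatten B) (flatten A) -> pp (B ++ Rest).
Proof.
case/andP=> ha hf hQ hB hfl; apply/andP; split.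
  by rewrite all_cat hB /=; move: ha; rewrite (perm_all _ hQ) all_cat => /andP[].
rewrite flatten_cat; apply: (perm_trans _ hf).
have h := perm_flatten hQ; rewrite perm_sym in h.
apply: (perm_trans _ h).
by rewrite flatten_cat perm_cat2r.
Qed.


Section Opt.
Variables (m c i0 : nat).
Hypothesis hm : forall Q, pp Q -> m <= size Q.
Hypothesis hc : forall Q, pp Q -> size Q = m -> count cc Q <= c.
Hypothesis hi : forall Q, pp Q -> size Q = m -> count cc Q = c -> i0 <= count iso Q.
Definition Opt Q := [/\ pp Q, size Q = m, count cc Q = c & count iso Q = i0].

Lemma split2 (Q : seq (seq T)) (x : T) (C : seq T) : [::x] \in Q -> C \in Q -> C != [::x] ->
  perm_eq Q ([:: [::x]; C] ++ rem C (rem [::x] Q)).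
Proof.
move=> hx hC hne; have h1 := perm_to_rem hx.
have hC' : C \in rem [::x] Q by move: hC; rewrite (perm_mem h1) in_cons (negbTE hne).
apply: (perm_trans h1) => /=; rewrite perm_cons; exact: perm_to_rem.
Qed.

Lemma red1 (Q : seq (seq T)) (x : T) (C : seq T) B : Opt Q -> [::x] \in Q -> C \in Q -> C != [::x] -> all gp B ->
  perm_eq (flatten B) (x :: C) -> size B = 1 -> False.
Proof.
case=> hpp hsz _ _ hx hC hne hB hfl hB1.
have hQ := split2 hx hC hne.
have hfl' : perm_eq (flatten B) (flatten [:: [::x]; C]) by rewrite /= cats0.
have hpp' := replace hpp hQ hB hfl'.
have := hm hpp'; rewrite size_cat hB1 -hsz (perm_size hQ) /=; lia.
Qed.

Lemma red2 (Q : seq (seq T)) (x : T) (C : seq T) B : Opt Q -> [::x] \in Q -> C \in Q -> C != [::x] -> all gp B ->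
  perm_eq (flatten B) (x :: C) -> size B = 2 -> ~~ cc C -> iso C + 1 <= count iso B.
Proof.
case=> hpp hsz hcc hiso hx hC hne hB hfl hB2 hnc.
have hQ := split2 hx hC hne.
have hfl' : perm_eq (flatten B) (flatten [:: [::x]; C]) by rewrite /= cats0.
have hpp' := replace hpp hQ hB hfl'.
have hs' : size (B ++ rem C (rem [:: x] Q)) = m.
  by rewrite size_cat hB2 -hsz (perm_size hQ).
have hc1 := hc hpp' hs'.
have /permP hQc := hQ.
move: hcc hiso; rewrite !hQc => hcc hiso.
have hc2 : count cc (B ++ rem C (rem [:: x] Q)) = c.
  apply/eqP; rewrite eqn_leq hc1 /=; move: hcc; rewrite !count_cat /= (negbTE hnc); lia.
have := hi hpp' hs' hc2; rewrite -hiso !count_cat /=; lia.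
Qed.


Lemma gp_cons x u t : e x u -> x \notin u :: t -> gp (u :: t) -> gp (x :: u :: t).
Proof. by move=> hxu hxn /andP[hp hu]; rewrite /= hxu hp /=; rewrite /= in hxn hu; rewrite hxn hu. Qed.

Lemma F1 (Q : seq (seq T)) (x u : T) : Opt Q -> [::x] \in Q -> e x u ->
  exists a b, [:: a; u; b] \in Q /\ ~~ cc [:: a; u; b].
Proof.
move=> hO hx hxu; have [hpp hsz hcc hiso] := hO.
have [C hC huC] := comp_exists u hpp.
have hxu' : x != u by apply: contraTneq hxu => ->; rewrite eirr.
have hne : C != [::x].
  by apply/eqP => hCx; move: huC; rewrite hCx inE eq_sym (negbTE hxu').
have hxC : x \notin C.
  apply/negP => hxC; have := comp_eq hpp hx hC (mem_head _ _) hxC.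
  by move=> h; rewrite h eqxx in hne.
have gC : gp C by move: hpp => /andP[/allP h _]; exact: h.
have KEY0 : forall t, gp (u :: t) -> perm_eq (u :: t) C -> False.
  move=> t gt hpt; apply: (@red1 Q x C [:: x :: u :: t]) => //.
    by apply/allP => p; rewrite inE => /eqP ->; apply: gp_cons => //; rewrite (perm_mem hpt).
  by rewrite /= cats0 perm_cons.
have KEY1 : ~~ cc C -> forall s t, gp (s ++ u :: t) -> perm_eq (s ++ u :: t) C -> size s = 1.
  move=> hnc s t gst hpt; case: s gst hpt => [|y s] gst hpt; first by case: (KEY0 t).
  have gt : gp (u :: t) by exact: gpath_catr gst _.
  have gs : gp (y :: s) by exact: gpath_catl gst _.
  have hxt : x \notin u :: t.
    by apply: contra hxC => h; rewrite -(perm_mem hpt) mem_cat h orbT.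
  have hall : all gp [:: x :: u :: t; y :: s].
    by apply/allP => p; rewrite !inE => /orP[]/eqP ->; [apply: gp_cons|].
  have hfl : perm_eq (flatten [:: x :: u :: t; y :: s]) (x :: C).
    by rewrite /= cats0 perm_cons -cat_cons perm_catC.
  have := @red2 Q x C [:: x :: u :: t; y :: s] hO hx hC hne hall hfl erefl hnc.
  have -> : iso C = false.
    by rewrite /isolated_vertex -(perm_size hpt) size_cat /= addnS.
  by rewrite /isolated_vertex /=; case: (size s).
case hccC : (cc C).
  move: hccC => /andP[_ /hasP[p hp hcyc]].
  rewrite mem_permutations in hp.
  have : u \in p by rewrite (perm_mem hp).
  case/rot_to => i t hrot.
  have hpt : perm_eq (u :: t) C by rewrite -hrot (perm_trans _ hp) // perm_rot.
  case: (KEY0 t) => //.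
  have hcy : cycle e (u :: t) by rewrite -hrot rot_cycle.
  rewrite /= rcons_path in hcy; case/andP: hcy => hpth _.
  rewrite /= hpth /= -/(uniq (u :: t)) (perm_uniq hpt).
  by move: gC; case: (C) => // ? ? /andP[].
have [s [t hCst]] : exists s t, C = s ++ u :: t.
  by case/splitPr: huC => s t; exists s, t.
rewrite hCst in gC.
have hs1 : size s = 1 by apply: (KEY1 _ s t) => //; [rewrite hccC | rewrite -hCst].
case: s hCst gC hs1 => [|a [|? ?]] // hCst gC _.
have hrev : rev ([:: a] ++ u :: t) = rev t ++ [:: u; a].
  by rewrite /= !rev_cons -!cats1 -catA.
have grev : gp (rev t ++ [:: u; a]) by rewrite -hrev; apply: gpath_rev.
have ht1 : size (rev t) = 1.
  apply: (KEY1 _ (rev t) [:: a]) => //; first by rewrite hccC.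
  by rewrite hCst -hrev perm_rev.
case: t hCst ht1 {hrev grev gC} => [|b [|? ?]]; rewrite ?size_rev // => hCst _.
by move: hC hccC; rewrite hCst /= => hC hccC; exists a, b; rewrite hC hccC.
Qed.


Lemma swap (Q : seq (seq T)) (x u a b y z : T) : Opt Q -> [::x] \in Q -> e x u ->
  [:: a; u; b] \in Q -> ~~ cc [:: a; u; b] -> perm_eq [:: y; z] [:: a; b] ->
  Opt ([:: x; u; z] :: [:: y] :: rem [:: a; u; b] (rem [:: x] Q)).
Proof.
move=> hO hx hxu hC hnc hyz; have [hpp hsz hcc hiso] := hO.
set C := [:: a; u; b] in hC hnc *.
have hxu' : x != u by apply: contraTneq hxu => ->; rewrite eirr.
have hne : C != [::x] by rewrite /C eqseq_cons andbF.
have hxC : x \notin C.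
  apply/negP => hxC; have := comp_eq hpp hx hC (mem_head _ _) hxC.
  by move=> h; rewrite h eqxx in hne.
have gC : gp C by move: hpp => /andP[/allP h _]; exact: h.
have hzC : z \in [:: a; b] by rewrite -(perm_mem hyz) !inE eqxx orbT.
have hQ := split2 hx hC hne.
have hB : all gp [:: [:: x; u; z]; [:: y]].
  rewrite /= andbT; move: gC => /= /and3P[/andP[hau hub] hu1 hu2].
  rewrite andbT in hub hu2; rewrite hxu /= !andbT.
  have hxz : x != z.
    by apply: contraNneq hxC => ->; move: hzC; rewrite !inE => /orP[]/eqP ->; rewrite ?eqxx ?orbT.
  move: hu1 hu2 hzC; rewrite !inE negb_or => /andP[hau' hab] hub'.
  rewrite (negbTE hxu') (negbTE hxz) /=.
  rewrite andbT in hub'; case/orP=> /eqP ->; first by rewrite (esym u a) hau eq_sym hau'.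
  by rewrite hub hub'.
have hfl : perm_eq (flatten [:: [:: x; u; z]; [:: y]]) (flatten [:: [:: x]; C]).
  rewrite /= perm_cons.
  have -> : [:: a; u; b] = [:: a] ++ [:: u] ++ [:: b] by [].
  rewrite perm_sym perm_catCA /= perm_cons perm_sym.
  have h2 : perm_eq [:: z; y] [:: y; z] by rewrite (perm_catC [:: z] [:: y]).
  exact: (perm_trans h2 hyz).
have hpp' := replace hpp hQ hB hfl.
have hs' : size ([:: [:: x; u; z]; [:: y]] ++ rem C (rem [:: x] Q)) = m.
  by rewrite size_cat -hsz (perm_size hQ).
have hc1 := hc hpp' hs'.
have /permP hQc := hQ.
move: hcc hiso; rewrite !hQc !count_cat /= (negbTE hnc) => hcc hiso.
rewrite count_cat /= in hc1.
split => //=.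
  move: hc1 hcc; set k := count cc _; set q := cc _; move=> hc1 hcc.
  rewrite /= !add0n !addn0 in hc1 hcc *.
  by apply/eqP; rewrite eqn_leq hc1 -hcc leq_addl.
Qed.


Variable P0 : seq (seq T).
Hypothesis hP0 : Opt P0.

Inductive reach : seq (seq T) -> Prop :=
| reach0 : reach P0
| reachS Q1 x u a b y z : reach Q1 -> [::x] \in Q1 -> e x u -> [:: a; u; b] \in Q1 ->
    ~~ cc [:: a; u; b] -> perm_eq [:: y; z] [:: a; b] ->
    reach ([:: x; u; z] :: [:: y] :: rem [:: a; u; b] (rem [:: x] Q1)).

Lemma reach_opt Q : reach Q -> Opt Q.
Proof.
elim => [|Q1 x u a b y z hr IH hx hxu hC hnc hyz] //.
exact: swap.
Qed.

Definition R x := exists Q, reach Q /\ [:: x] \in Q.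

Lemma inv Q0 : reach Q0 -> forall u y z, [:: y; u; z] \in Q0 -> R y -> R z ->
  exists a b, [:: a; u; b] \in P0 /\ R a /\ R b.
Proof.
elim => [|Q1 x u a b y z hr IH hx hxu hC hnc hyz] u' y' z' hin hRy hRz.
  by exists y', z'.
move: hin; rewrite !inE => /orP[/eqP [hy hu hz]| /orP[/eqP //| hin]].
  subst y' u' z'.
  have hRy0 : R y.
    exists ([:: x; u; z] :: [:: y] :: rem [:: a; u; b] (rem [:: x] Q1)); split.
      exact: reachS.
    by rewrite !inE eqxx orbT.
  have hab : forall w, w \in [:: a; b] -> R w.
    by move=> w; rewrite -(perm_mem hyz) !inE => /orP[]/eqP ->.
  by apply: (IH u a b) => //; apply: hab; rewrite !inE eqxx ?orbT.
by apply: (IH u' y' z') => //; move: hin => /mem_rem /mem_rem.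
Qed.

Lemma W_prop u x : R x -> e x u -> exists a b, [:: a; u; b] \in P0 /\ R a /\ R b.
Proof.
case=> Q [hr hx] hxu.
have hO := reach_opt hr.
have [a [b [hC hnc]]] := F1 hO hx hxu.
apply: (inv hr hC).
  exists ([:: x; u; b] :: [:: a] :: rem [:: a; u; b] (rem [:: x] Q)); split.
    exact: (reachS hr hx hxu hC hnc (perm_refl _)).
  by rewrite !inE eqxx orbT.
exists ([:: x; u; a] :: [:: b] :: rem [:: a; u; b] (rem [:: x] Q)); split.
  apply: (reachS hr hx hxu hC hnc).
  by rewrite (perm_catC [:: b] [:: a]).
by rewrite !inE eqxx orbT.
Qed.


Variables (d : nat) (hd : 1 <= d) (hreg : regular e d).

Definition pb (P : Prop) : bool := if excluded_middle_informative P then true else false.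
Lemma pbP P : reflect P (pb P).
Proof. by rewrite /pb; case: excluded_middle_informative => h; constructor. Qed.

Definition Rs := [set x | pb (R x)].
Definition Ws := [set u | pb (exists x, R x /\ e x u)].

Lemma deg x : \sum_y (e x y : nat) = d.
Proof.
rewrite -(hreg x) -sum1_card [RHS]big_mkcond /=; apply: eq_bigr => y _.
by rewrite inE; case: (e x y).
Qed.

Lemma count1 : #|Rs| * d <= #|Ws| * d.
Proof.
rewrite -!sum_nat_const.
have -> : \sum_(x in Rs) d = \sum_(x in Rs) \sum_(y in Ws) (e x y : nat).
  apply: eq_bigr => x; rewrite inE => /pbP hx.
  rewrite -(deg x) [RHS]big_mkcond /=; apply: eq_bigr => y _.
  case: ifP => // /negbT hy; case hxy: (e x y) => //.
  by case/negP: hy; rewrite inE; apply/pbP; exists x.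
rewrite exchange_big /=; apply: leq_sum => y _.
rewrite -(deg y) [X in _ <= X](bigID (fun x => x \in Rs)) /=.
apply: leq_trans (leq_addr _ _); rewrite leq_eqVlt; apply/orP; left; apply/eqP.
by apply: eq_bigr => x _; rewrite esym.
Qed.


Definition comp (u : T) := nth [::] P0 (find (fun p => u \in p) P0).
Definition fa u := head u (comp u).
Definition fb u := last u (comp u).

Lemma compW u : u \in Ws ->
  [/\ comp u = [:: fa u; u; fb u], comp u \in P0, R (fa u) & R (fb u)].
Proof.
rewrite inE => /pbP [x [hx hxu]].
have [a [b [hC [ha hb]]]] := W_prop hx hxu.
have [hpp _ _ _] := hP0.
have hh : has (fun p => u \in p) P0 by apply/hasP; exists [:: a; u; b] => //; rewrite !inE eqxx orbT.
have hc1 : comp u \in P0 by rewrite /comp mem_nth // -has_find.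
have hc2 : u \in comp u by rewrite /comp; exact: (nth_find [::] hh).
have hq : comp u = [:: a; u; b].
  by apply: (comp_eq hpp hc1 hC hc2); rewrite !inE eqxx orbT.
by rewrite /fa /fb hq.
Qed.

Lemma count2 v : [:: v] \in P0 -> (#|Ws| + #|Ws|).+1 <= #|Rs|.
Proof.
move=> hv; have [hpp _ _ _] := hP0.
have same : forall u u' w, u \in Ws -> u' \in Ws -> w \in comp u -> w \in comp u' -> u = u'.
  move=> u u' w hu hu' h1 h2.
  have [e1 c1 _ _] := compW hu; have [e2 c2 _ _] := compW hu'.
  have := comp_eq hpp c1 c2 h1 h2; rewrite e1 e2; by case.
have inj_a : {in Ws &, injective fa}.
  move=> u u' hu hu' h; apply: (same u u' (fa u)) => //.
    by case: (compW hu) => -> _ _ _; rewrite mem_head.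
  by rewrite h; case: (compW hu') => -> _ _ _; rewrite mem_head.
have inj_b : {in Ws &, injective fb}.
  move=> u u' hu hu' h; apply: (same u u' (fb u)) => //.
    by case: (compW hu) => -> _ _ _; rewrite !inE eqxx !orbT.
  by rewrite h; case: (compW hu') => -> _ _ _; rewrite !inE eqxx !orbT.
have disj : [set fa u | u in Ws] :&: [set fb u | u in Ws] = set0.
  apply/setP => w; rewrite !inE; apply/negP => /andP[/imsetP[u hu ->] /imsetP[u' hu' h]].
  have hsame : u = u'.
    apply: (same u u' (fa u)) => //.
      by case: (compW hu) => -> _ _ _; rewrite mem_head.
    by rewrite h; case: (compW hu') => -> _ _ _; rewrite !inE eqxx !orbT.
  subst u'; case: (compW hu) => hcu hc0 _ _.
  have gC : gp (comp u) by move: hpp => /andP[/allP hall _]; exact: hall.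
  move: gC; rewrite hcu /= h !inE eqxx /=; by rewrite orbT andbF.
have hvn : v \notin [set fa u | u in Ws] :|: [set fb u | u in Ws].
  rewrite inE; apply/negP => /orP[] /imsetP[u hu hvu].
    case: (compW hu) => hcu hc0 _ _.
    have := comp_eq hpp hv hc0 (mem_head _ _) (_ : v \in comp u).
    by rewrite hcu hvu mem_head => /(_ isT).
  case: (compW hu) => hcu hc0 _ _.
  have := comp_eq hpp hv hc0 (mem_head _ _) (_ : v \in comp u).
  by rewrite hcu hvu !inE eqxx !orbT => /(_ isT).
have hsub : v |: ([set fa u | u in Ws] :|: [set fb u | u in Ws]) \subset Rs.
  apply/subsetP => w; rewrite !inE => /orP[/eqP ->|/orP[]/imsetP[u hu ->]]; apply/pbP.
  - by exists P0; split => //; exact: reach0.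
  - by case: (compW hu).
  - by case: (compW hu).
have := subset_leq_card hsub.
rewrite cardsU1 hvn cardsU disj cards0 subn0 (card_in_imset inj_a) (card_in_imset inj_b).
by [].
Qed.

Lemma no_iso : has iso P0 -> False.
Proof.
case/hasP => p hp; rewrite /isolated_vertex; case: p hp => [|v [|? ?]] // hv _.
have h1 := count2 hv.
have h2 := count1.
rewrite leq_pmul2r // in h2.
have := leq_trans h1 h2; rewrite ltnNge; case/negP; exact: leq_addr.
Qed.

End Opt.
End Gen.

Lemma ex_min (P : nat -> Prop) : (exists n, P n) -> exists n, P n /\ forall k, P k -> n <= k.
Proof.
move=> hex.
have hex' : exists n, pb (P n) by case: hex => n hn; exists n; apply/pbP.
case: (ex_minnP hex') => n /pbP hn hmin; exists n; split => // k hk.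
by apply: hmin; apply/pbP.
Qed.

Lemma ex_max (P : nat -> Prop) B : (exists n, P n) -> (forall n, P n -> n <= B) ->
  exists n, P n /\ forall k, P k -> k <= n.
Proof.
move=> hex hB.
have hex' : exists n, pb (P n) by case: hex => n hn; exists n; apply/pbP.
have hB' : forall n, pb (P n) -> n <= B by move=> n /pbP; exact: hB.
case: (ex_maxnP hex' hB') => n /pbP hn hmax; exists n; split => // k hk.
by apply: hmax; apply/pbP.
Qed.

Theorem lemma6 (T : finType) (e : rel T) (esym : symmetric e)
  (eirr : irreflexive e) (d : nat) (hd : 1 <= d) (hreg : regular e d) :
  exists P : seq (seq T), canonical_path_partition e P.
Proof.
have pp1 : path_partition e [seq [:: x] | x <- enum T].
  apply/andP; split; last by rewrite flatten_seq1.
  by apply/allP => p /mapP[x _ ->].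
have [m [[Q1 [hQ1 hs1]] hm0]] := ex_min (P := fun n => exists Q, path_partition e Q /\ size Q = n)
  (ex_intro _ _ (ex_intro _ _ (conj pp1 erefl))).
have hm : forall Q, path_partition e Q -> m <= size Q.
  by move=> Q hQ; apply: hm0; exists Q.
set Pc := fun k => exists Q, path_partition e Q /\ size Q = m /\ count (cycle_component e) Q = k.
have hPc1 : exists k, Pc k by exists (count (cycle_component e) Q1), Q1.
have hPc2 : forall k, Pc k -> k <= m.
  by move=> k [Q [_ [<- <-]]]; exact: count_size.
have [c [[Q2 [hQ2 [hs2 hc2]]] hc0]] := ex_max hPc1 hPc2.
have hc : forall Q, path_partition e Q -> size Q = m -> count (cycle_component e) Q <= c.
  by move=> Q hQ hs; apply: hc0; exists Q.
set Pi := fun j => exists Q, [/\ path_partition e Q, size Q = m, count (cycle_component e) Q = c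
   & count (@isolated_vertex T) Q = j].
have hPi1 : exists j, Pi j by exists (count (@isolated_vertex T) Q2), Q2.
have [i0 [[P0 hP0] hi0]] := ex_min hPi1.
have hi : forall Q, path_partition e Q -> size Q = m -> count (cycle_component e) Q = c ->
    i0 <= count (@isolated_vertex T) Q.
  by move=> Q hQ hs hcc; apply: hi0; exists Q.
exists P0; case: (hP0) => hpp hs hcc hiso; split => //.
- by move=> Q hQ; rewrite hs; apply: hm.
- by move=> Q hQ hsQ; rewrite hcc; apply: hc => //; rewrite hsQ.
apply/negP => hh; exact: (no_iso esym eirr hm hc hi hP0 hd hreg hh).
Qed.
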